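(* Let $\mathcal{K}=(\mathcal{D},\mathsf{O})$ be a $\mathcal{DBL}$ knowledge base over $V$ with $\mathcal{D}=(\mathcal{B}_1,\mathcal{B}_\rightarrow)$, let $c\in\mathfrak{C}$, and let $\phi$ be a context formula for $c$ with respect to $\mathsf{O}$. If $\delta_{\mathcal{B}_\rightarrow}(\phi)>0$, then $P_{\mathcal{K}}(c[\infty])=1$ (independently of $\mathcal{B}_1$).
   Context: An ontology language $\mathcal{L}$ consists of sets $\mathfrak{A}$ (axioms) and $\mathfrak{C}$ (consequences), a class $\mathfrak{O}$ of finite subsets of $\mathfrak{A}$ (ontologies) closed under subsets, a class $\mathfrak{I}$ of interpretations, and a relation $\models\subseteq\mathfrak{I}\times(\mathfrak{A}\cup\mathfrak{C})$; $\mathcal{O}\models c$ means every interpretation satisfying all axioms of $\mathcal{O}$ satisfies $c$. Let $V$ be a finite set of Boolean variables. A $V$-ontology is a finite set $\mathsf{O}$ of pairs $\langle\alpha:\kappa\rangle$ with $\alpha\in\mathfrak{A}$ and $\kappa$ a consistent set of literals over $V$, such that $\{\alpha\mid\langle\alpha:\kappa\rangle\in\mathsf{O}\}\in\mathfrak{O}$. For a valuation (world) $\mathcal{W}$ of $V$, $\mathsf{O}_{\mathcal{W}}:=\{\alpha\mid\langle\alpha:\kappa\rangle\in\mathsf{O},\ \mathcal{W}\models_p\kappa\}$. A context formula for $c$ w.r.t. $\mathsf{O}$ is a propositional formula $\phi$ over $V$ such that for every valuation $\mathcal{W}$ of $V$: $\mathsf{O}_{\mathcal{W}}\models c$ iff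 $\mathcal{W}\models_p\phi$. A two-slice BN (TBN) over $V$ is a pair $(G,\Phi)$ with $G$ a DAG on $V\cup V'$, $V'=\{x'\mid x\in V\}$, with no edges into elements of $V$, and $\Phi$ giving for each $x'\in V'$ a conditional distribution $P(x'\mid\pi(x'))$ given its parents. A DBN over $V$ is a pair $\mathcal{D}=(\mathcal{B}_1,\mathcal{B}_\rightarrow)$ with $\mathcal{B}_1$ a BN over $V$ and $\mathcal{B}_\rightarrow$ a TBN over $V$. The unraveling $\mathcal{B}_{1:t}$ is the BN over $V_1\cup\dots\cup V_t$ (copies $x_i$ of each $x\in V$) in which the nodes of $V_1$ have the structure and tables of $\mathcal{B}_1$, and for $2\le i\le t$ each $x_i$ has as parents the images of $\pi(x')$ in $\mathcal{B}_\rightarrow$ under $y\mapsto y_{i-1}$, $y'\mapsto y_i$, with the conditional table of $x'$. For a valuation $\mathcal{W}$ of $V_1\cup\dots\cup V_t$, $\mathcal{W}(i)$ denotes its restriction to $V_i$, viewed as a valuation of $V$. A $\mathcal{DBL}$ KB is a pair $\mathcal{K}=(\mathcal{D},\mathsf{O})$ with $\mathcal{D}$ a DBN over $V$ and $\mathsf{O}$ a $V$-ontology. The probability of observing $c$ within $t$ steps is $P_{\mathcal{K}}(c[1:t]):=\sum_{\mathcal{W}\,:\,\exists i\in\{1,\dots,t\}.\ \mathsf{O}_{\mathcal{W}(i)}\models c}P_{\mathcal{B}_{1:t}}(\mathcal{W})$, the sum over valuations $\mathcal{W}$ of $V_1\cup\dots\cup V_t$; this is nondecreasing in $t$ and bounded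 by 1, and the probability of eventually observing $c$ is $P_{\mathcal{K}}(c[\infty]):=\lim_{t\to\infty}P_{\mathcal{K}}(c[1:t])$. A TBN $\mathcal{B}$ over $V$ defines a time-homogeneous Markov chain on the finite set of valuations of $V$ with transition probabilities $P(\mathcal{W}'\mid\mathcal{W}):=\prod_{x'\in V'}P(x'\mid\pi(x'))$ evaluated with $V$ set according to $\mathcal{W}$ and $V'$ according to $\mathcal{W}'$. A distribution $P_W$ on valuations of $V$ is stationary if $\sum_{\mathcal{W}}P(\mathcal{V}\mid\mathcal{W})P_W(\mathcal{W})=P_W(\mathcal{V})$ for every valuation $\mathcal{V}$. Let $\Delta_{\mathcal{B}}$ be the set of stationary distributions, and for a propositional formula $\phi$ over $V$ let $\delta_{\mathcal{B}}(\phi):=\min_{P\in\Delta_{\mathcal{B}}}\sum_{\mathcal{W}\models_p\phi}P(\mathcal{W})$. *)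

(* Defs.v *)
From Stdlib Require Import Reals List ClassicalDescription.
From mathcomp Require Import all_boot.

Set Implicit Arguments.
Unset Strict Implicit.
Unset Printing Implicit Defensive.

Local Open Scope R_scope.

Record OntologyLanguage := {
  ol_ax : Type;
  ol_cons : Type;
  ol_is_ont : list ol_ax -> Prop;
  ol_is_ont_closed : forall O O', List.incl O' O -> ol_is_ont O -> ol_is_ont O';
  ol_interp : Type;
  ol_models_ax : ol_interp -> ol_ax -> Prop;
  ol_models_cons : ol_interp -> ol_cons -> Prop
}.

Definition entails (L : OntologyLanguage) (O : list (ol_ax L)) (c : ol_cons L) : Prop :=
  forall I : ol_interp L,
    (forall a, List.In a O -> ol_models_ax I a) -> ol_models_cons I c.

Definition world (V : finType) := {ffun V -> bool}.

Inductive pform (V : Type) : Type :=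
| PVar : V -> pform V
| PTrue : pform V
| PFalse : pform V
| PNot : pform V -> pform V
| PAnd : pform V -> pform V -> pform V
| POr : pform V -> pform V -> pform V.

Fixpoint psat (V : finType) (W : world V) (phi : pform V) : bool :=
  match phi with
  | PVar x => W x
  | PTrue => true
  | PFalse => false
  | PNot p => ~~ psat W p
  | PAnd p q => psat W p && psat W q
  | POr p q => psat W p || psat W q
  end.

(* literals: (x, true) = x, (x, false) = ¬x *)
Definition literal (V : Type) := (V * bool)%type.

Definition consistent (V : Type) (k : list (literal V)) : Prop :=
  ~ (exists x, List.In (x, true) k /\ List.In (x, false) k).

Definition sat_lits (V : finType) (W : world V) (k : list (literal V)) : bool :=
  all (fun l => W l.1 == l.2) k.

Definition vontology (L : OntologyLanguage) (V : Type) :=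
  list (ol_ax L * list (literal V)).

Definition is_vontology (L : OntologyLanguage) (V : Type) (O : vontology L V) : Prop :=
  (forall p, List.In p O -> consistent p.2) /\ ol_is_ont (map fst O).

Definition restrict (L : OntologyLanguage) (V : finType) (O : vontology L V)
  (W : world V) : list (ol_ax L) :=
  map fst (filter (fun p => sat_lits W p.2) O).

Definition context_formula (L : OntologyLanguage) (V : finType) (O : vontology L V)
  (c : ol_cons L) (phi : pform V) : Prop :=
  forall W : world V, entails (restrict O W) c <-> psat W phi = true.

(* bn_par y x : y is a parent of x; bn_cpt x W = P(x = true | π(x)),
   evaluated at the values W gives to the parents (locality). *)
Record BN (V : finType) := {
  bn_par : V -> V -> bool;
  bn_dag : exists rank : V -> nat, forall x y, bn_par y x -> (rank y < rank x)%N;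
  bn_cpt : V -> world V -> R;
  bn_cpt_local : forall x (W W' : world V), (forall y, bn_par y x -> W y = W' y) ->
                   bn_cpt x W = bn_cpt x W';
  bn_cpt_range : forall x W, 0 <= bn_cpt x W <= 1
}.

Definition bn_joint (V : finType) (B : BN V) (W : world V) : R :=
  \big[Rmult/1]_(x : V) (if W x then bn_cpt B x W else 1 - bn_cpt B x W).

(* Two-slice BN: graph on V ∪ V', no edges into V.
   tbn_parV y x : y (in V) is a parent of x';
   tbn_parV' y x : y' (in V') is a parent of x';
   tbn_cpt x W W' = P(x' = true | π(x')) with V set by W and V' set by W'. *)
Record TBN (V : finType) := {
  tbn_parV : V -> V -> bool;
  tbn_parV' : V -> V -> bool;
  tbn_dag : exists rank : V -> nat, forall x y, tbn_parV' y x -> (rank y < rank x)%N;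
  tbn_cpt : V -> world V -> world V -> R;
  tbn_cpt_local : forall x (W1 W1' W2 W2' : world V),
      (forall y, tbn_parV y x -> W1 y = W2 y) ->
      (forall y, tbn_parV' y x -> W1' y = W2' y) ->
      tbn_cpt x W1 W1' = tbn_cpt x W2 W2';
  tbn_cpt_range : forall x W W', 0 <= tbn_cpt x W W' <= 1
}.

Definition trans (V : finType) (T : TBN V) (W W' : world V) : R :=
  \big[Rmult/1]_(x : V) (if W' x then tbn_cpt T x W W' else 1 - tbn_cpt T x W W').

Definition DBN (V : finType) := (BN V * TBN V)%type.

(* Joint distribution of the unraveling B_{1:t}, on a trajectory
   [W(1); ...; W(t)]: product of all conditional tables, i.e.
   P_{B1}(W(1)) * Π_{i=2}^t P(W(i) | W(i-1)). *)
Fixpoint chain_prob (V : finType) (T : TBN V) (w : world V) (ws : seq (world V)) : R :=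
  match ws with
  | [::] => 1
  | w' :: ws' => trans T w w' * chain_prob T w' ws'
  end.

Definition unravel_joint (V : finType) (D : DBN V) (ws : seq (world V)) : R :=
  match ws with
  | [::] => 1
  | w :: ws' => bn_joint D.1 w * chain_prob D.2 w ws'
  end.

Definition DBL_KB (L : OntologyLanguage) (V : finType) :=
  (DBN V * vontology L V)%type.

Definition ind (P : Prop) : R := if excluded_middle_informative P then 1 else 0.

Definition prob_within (L : OntologyLanguage) (V : finType) (K : DBL_KB L V)
  (c : ol_cons L) (t : nat) : R :=
  \big[Rplus/0]_(W : t.-tuple (world V))
     (ind (exists i : 'I_t, entails (restrict K.2 (tnth W i)) c)
        * unravel_joint K.1 W).

(* P_K(c[∞]) = 1 : the limit of P_K(c[1:t]) as t → ∞ is 1 *)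
Definition prob_eventually_is (L : OntologyLanguage) (V : finType) (K : DBL_KB L V)
  (c : ol_cons L) (p : R) : Prop :=
  Un_cv (fun t => prob_within K c t) p.

Definition stationary (V : finType) (T : TBN V) (P : world V -> R) : Prop :=
  (forall W, 0 <= P W) /\
  \big[Rplus/0]_(W : world V) P W = 1 /\
  (forall U : world V, \big[Rplus/0]_(W : world V) (trans T W U * P W) = P U).

Definition mass (V : finType) (P : world V -> R) (phi : pform V) : R :=
  \big[Rplus/0]_(W : world V | psat W phi) P W.

Definition is_delta (V : finType) (T : TBN V) (phi : pform V) (d : R) : Prop :=
  (exists P, stationary T P /\ mass P phi = d) /\
  (forall P, stationary T P -> d <= mass P phi).

(* Main.v *)
Set Warnings "-notation-overridden,-ambiguous-paths".
Require Import Defs.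
From Stdlib Require Import Reals Lra.
From mathcomp Require Import all_boot.
From mathcomp Require Import ssralg matrix mxalgebra Rstruct.
Set Warnings "-notation-overridden,-ambiguous-paths".
Set Implicit Arguments. Unset Strict Implicit. Unset Printing Implicit Defensive.
Local Open Scope R_scope.

Section Dag.
Variable V : finType.
Variable par : V -> V -> bool.
Variable rank : V -> nat.
Hypothesis Hr : forall x y, par y x -> (rank y < rank x)%N.
Variable f : V -> world V -> R.
Hypothesis Hloc : forall x (W W' : world V), (forall y, par y x -> W y = W' y) -> f x W = f x W'.

Definition fac x (W : world V) := if W x then f x W else 1 - f x W.
Definition zoff (S : {set V}) (W : world V) := [forall y, (y \notin S) ==> ~~ W y].
Definition tog (x : V) (W : world V) : world V := [ffun y => if y == x then ~~ W y else W y].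

Lemma togK x : involutive (tog x).
Proof. move=> W; apply/ffunP=> y; rewrite !ffunE; case: eqP => //= _; exact: negbK. Qed.

Lemma zoffD1 (S : {set V}) (x : V) (W : world V) : x \in S ->
  zoff (S :\ x) W = zoff S W && ~~ W x.
Proof.
move=> Hx; apply/idP/idP.
- move/forallP=> H; apply/andP; split.
  + apply/forallP=> y; apply/implyP=> Hy; move/implyP: (H y); apply.
    by rewrite in_setD1 (negbTE Hy) andbF.
  + by move/implyP: (H x); apply; rewrite in_setD1 eqxx.
- case/andP=> /forallP H Hwx; apply/forallP=> y; apply/implyP.
  rewrite in_setD1 negb_and negbK; case/orP.
  + by move/eqP->.
  + by move=> Hy; move/implyP: (H y); apply.
Qed.

Lemma zoff_tog (S : {set V}) (x : V) (W : world V) : x \in S -> zoff S (tog x W) = zoff S W.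
Proof.
move=> Hx; apply/idP/idP => /forallP H; apply/forallP=> y; apply/implyP=> Hy;
  move/implyP: (H y) => /(_ Hy); rewrite ffunE;
  (case: eqP => [Eyx|//]; subst y; by rewrite Hx in Hy).
Qed.

Lemma dag_step n : forall (S : {set V}),
  (forall x y, x \in S -> par y x -> y \in S) -> #|S| = n ->
  \big[Rplus/0]_(W | zoff S W) \big[Rmult/1]_(x in S) fac x W = 1.
Proof.
elim: n => [|n IH] S HS Hcard.
- have S0: S = set0 by apply/eqP; rewrite -cards_eq0 Hcard.
  subst S.
  rewrite (big_pred1 [ffun => false]).
  + by rewrite big_set0.
  + move=> W /=; apply/idP/eqP.
    * rewrite /zoff; move/forallP=> H; apply/ffunP=> y; rewrite ffunE.
      by move/implyP: (H y); rewrite inE => /(_ isT) /negbTE.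
    * by move->; rewrite /zoff; apply/forallP=> y; rewrite ffunE implybT.
- have: (0 < #|S|)%N by rewrite Hcard.
  case/card_gt0P=> x0 Hx0.
  case: (arg_maxnP rank Hx0) => x HxS0 Hmax.
  have HxS : x \in S := HxS0.
  have Hnc : forall z, z \in S -> ~~ par x z.
  { move=> z Hz; apply/negP=> Hp; have := Hr Hp; have := Hmax z Hz.
    move=> h1 h2; have := leq_ltn_trans h1 h2; by rewrite ltnn. }
  have HS' : forall z y, z \in S :\ x -> par y z -> y \in S :\ x.
  { move=> z y; rewrite !in_setD1 => /andP[Hzx HzS] Hp.
    rewrite (HS _ _ HzS Hp) andbT; apply/eqP=> Eyx; subst y.
    by move: (Hnc _ HzS); rewrite Hp. }
  have Hc' : #|S :\ x| = n. by move: (cardsD1 x S); rewrite Hcard HxS add1n => -[].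
  apply: (etrans _ (IH _ HS' Hc')).
  rewrite (bigID (fun W : world V => W x)) /=.
  rewrite (reindex_inj (can_inj (togK x))) /=.
  have -> : \big[Rplus/0]_(W | zoff S (tog x W) && tog x W x)
      \big[Rmult/1]_(x1 in S) fac x1 (tog x W) =
      \big[Rplus/0]_(W | zoff (S :\ x) W)
      \big[Rmult/1]_(x1 in S) fac x1 (tog x W).
  { apply: eq_bigl => W; by rewrite zoff_tog // zoffD1 // ffunE eqxx. }
  have -> : \big[Rplus/0]_(W | zoff S W && ~~ W x)
      \big[Rmult/1]_(x1 in S) fac x1 W =
      \big[Rplus/0]_(W | zoff (S :\ x) W)
      \big[Rmult/1]_(x1 in S) fac x1 W.
  { by apply: eq_bigl => W; rewrite zoffD1. }
  rewrite -big_split /=; apply: eq_bigr => W HW.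
  have HWx : W x = false by move: HW; rewrite zoffD1 // => /andP[_ /negbTE].
  rewrite (bigD1 x HxS) (bigD1 x HxS) /=.
  have Hf : forall z, z \in S -> f z (tog x W) = f z W.
  { move=> z Hz; apply: Hloc => y Hy; rewrite ffunE; case: eqP => // Eyx; subst y.
    by move: (Hnc _ Hz); rewrite Hy. }
  have -> : \big[Rmult/1]_(i in S | i != x) fac i (tog x W) =
            \big[Rmult/1]_(i in S | i != x) fac i W.
  { apply: eq_bigr => z /andP[Hz Hzx]; rewrite /fac Hf // ffunE (negbTE Hzx) //. }
  have -> : \big[Rmult/1]_(i in S | i != x) fac i W =
            \big[Rmult/1]_(i in S :\ x) fac i W.
  { by apply: eq_bigl => z; rewrite in_setD1 andbC. }
  rewrite /fac ffunE eqxx HWx /= Hf //; lra.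
Qed.

Lemma dag_sum1 :
  \big[Rplus/0]_(W : world V) \big[Rmult/1]_(x : V) fac x W = 1.
Proof.
apply: (etrans _ (@dag_step #|[set: V]| [set: V] _ erefl)) => //.
apply: eq_big => W.
- by apply/esym/forallP=> y; rewrite in_setT.
- by move=> _; apply: eq_bigl => x; rewrite in_setT.
Qed.
End Dag.

Lemma bn_sum1 (V : finType) (B : BN V) : \big[Rplus/0]_(W : world V) bn_joint B W = 1.
Proof.
case: (bn_dag B) => rk Hrk.
exact: (@dag_sum1 V (bn_par B) rk Hrk (bn_cpt B) (@bn_cpt_local V B)).
Qed.

Lemma trans_sum1 (V : finType) (T : TBN V) W : \big[Rplus/0]_(W' : world V) trans T W W' = 1.
Proof.
case: (tbn_dag T) => rk Hrk.
apply: (@dag_sum1 V (tbn_parV' T) rk Hrk (fun x W' => tbn_cpt T x W W')).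
move=> x W1 W2 H; exact: tbn_cpt_local.
Qed.
Lemma big_tuple0 (T : finType) (F : 0.-tuple T -> R) :
  \big[Rplus/0]_(ws : 0.-tuple T) F ws = F [tuple].
Proof. apply: big_pred1 => ws /=; apply/esym/eqP; exact: tuple0. Qed.

Lemma big_tupleS (T : finType) n (F : n.+1.-tuple T -> R) :
  \big[Rplus/0]_(ws : n.+1.-tuple T) F ws =
  \big[Rplus/0]_(v : T) \big[Rplus/0]_(ws : n.-tuple T) F [tuple of v :: ws].
Proof.
rewrite pair_big /=.
rewrite (reindex (fun p : T * n.-tuple T => [tuple of p.1 :: p.2])) /=.
- by apply: eq_bigl.
- exists (fun t => (thead t, [tuple of behead t])).
  + by move=> [v ws] _ /=; congr pair; apply: val_inj.
  + by move=> t _ /=; rewrite [RHS]tuple_eta.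
Qed.

Lemma sumR_opp (I : Type) (r : seq I) (P : pred I) (F : I -> R) :
  \big[Rplus/0]_(i <- r | P i) (- F i) = - \big[Rplus/0]_(i <- r | P i) F i.
Proof. elim/big_rec2: _ => [|i y1 y2 _ ->]; lra. Qed.

Lemma sumR_minus (I : Type) (r : seq I) (P : pred I) (F G : I -> R) :
  \big[Rplus/0]_(i <- r | P i) (F i - G i) =
  \big[Rplus/0]_(i <- r | P i) F i - \big[Rplus/0]_(i <- r | P i) G i.
Proof. elim/big_rec3: _ => [|i y1 y2 y3 _ ->]; lra. Qed.

Lemma sumR_distrr (I : Type) (r : seq I) (P : pred I) (F : I -> R) a :
  a * \big[Rplus/0]_(i <- r | P i) F i = \big[Rplus/0]_(i <- r | P i) (a * F i).
Proof. elim/big_rec2: _ => [|i y1 y2 _ <-]; lra. Qed.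

Section Chain.
Variable V : finType.

Fixpoint G (T : TBN V) (a : world V -> R) n (w : world V) : R :=
  match n with
  | O => 1
  | S n => \big[Rplus/0]_(w' : world V) (trans T w w' * a w' * G T a n w')
  end.

Lemma chain_G T a n w :
  \big[Rplus/0]_(ws : n.-tuple (world V))
     (\big[Rmult/1]_(v <- ws) a v * chain_prob T w ws) = G T a n w.
Proof.
elim: n w => [|n IH] w.
- by rewrite big_tuple0 /= big_nil; lra.
- rewrite big_tupleS /=; apply: eq_bigr => v _.
  rewrite -IH sumR_distrr; apply: eq_bigr => ws _.
  rewrite big_cons /=; set X := bigop _ _ _; set Y := chain_prob _ _ _; ring.
Qed.

Lemma unravel_G (D : DBN V) a n :
  \big[Rplus/0]_(ws : n.+1.-tuple (world V))
     (\big[Rmult/1]_(v <- ws) a v * unravel_joint D ws) =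
  \big[Rplus/0]_(w : world V) (a w * bn_joint D.1 w * G D.2 a n w).
Proof.
rewrite big_tupleS; apply: eq_bigr => v _.
rewrite -chain_G sumR_distrr; apply: eq_bigr => ws _.
rewrite big_cons /=; set X := bigop _ _ _; set Y := chain_prob _ _ _; set Z := bn_joint _ _; ring.
Qed.

Lemma G_one T n w : G T (fun _ => 1) n w = 1.
Proof.
elim: n w => [|n IH] w //=.
apply: (etrans _ (trans_sum1 T w)); apply: eq_bigr => w' _; rewrite IH; lra.
Qed.
End Chain.
Lemma sumR_ge0 (I : Type) (r : seq I) (P : pred I) (F : I -> R) :
  (forall i, P i -> 0 <= F i) -> 0 <= \big[Rplus/0]_(i <- r | P i) F i.
Proof. move=> H; elim/big_rec: _ => [|i y Hi Hy]; [lra | have := H i Hi; lra]. Qed.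

Lemma sumR_le (I : Type) (r : seq I) (P : pred I) (F G : I -> R) :
  (forall i, P i -> F i <= G i) ->
  \big[Rplus/0]_(i <- r | P i) F i <= \big[Rplus/0]_(i <- r | P i) G i.
Proof. move=> H; elim/big_rec2: _ => [|i y1 y2 Hi Hy]; [lra | have := H i Hi; lra]. Qed.

Lemma sumR_term (I : finType) (F : I -> R) j :
  (forall i, 0 <= F i) -> F j <= \big[Rplus/0]_i F i.
Proof.
move=> H; rewrite (bigD1 j) //=; set s := bigop _ _ _.
have : 0 <= s by apply: sumR_ge0 => i _; apply: H.
lra.
Qed.

Lemma sumR_zero (I : finType) (F : I -> R) j :
  (forall i, 0 <= F i) -> \big[Rplus/0]_i F i = 0 -> F j = 0.
Proof. move=> H Hs; have := sumR_term j H; have := H j; lra. Qed.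

Lemma sumR_abs (I : Type) (r : seq I) (P : pred I) (F : I -> R) :
  Rabs (\big[Rplus/0]_(i <- r | P i) F i) <= \big[Rplus/0]_(i <- r | P i) Rabs (F i).
Proof.
elim/big_rec2: _ => [|i y1 y2 Hi Hy]; first by rewrite Rabs_R0; lra.
have := Rabs_triang (F i) y2; lra.
Qed.

Lemma trans_ge0 (V : finType) (T : TBN V) W W' : 0 <= trans T W W'.
Proof.
rewrite /trans; elim/big_rec: _ => [|x y _ Hy]; first lra.
apply: Rmult_le_pos => //; have := tbn_cpt_range T x W W'; case: (W' x); lra.
Qed.

Section Stat.
Variable V : finType.
Variable T : TBN V.
Variable S : pred (world V).
Variable x0 : world V.
Hypothesis Sx0 : S x0.
Hypothesis Sclosed : forall x y, S x -> 0 < trans T x y -> S y.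

Definition Pp (x y : world V) : R := if S x then trans T x y else (if y == x0 then 1 else 0).

Lemma Pp_ge0 x y : 0 <= Pp x y.
Proof. rewrite /Pp; case: (S x); [exact: trans_ge0 | case: (y == x0); lra]. Qed.

Lemma Pp_sum1 x : \big[Rplus/0]_y Pp x y = 1.
Proof.
rewrite /Pp; case: (S x); first exact: trans_sum1.
rewrite (bigD1 x0) //= eqxx big1 => [|y /negbTE -> //]; lra.
Qed.

Lemma Pp_out x y : ~~ S y -> Pp x y = 0.
Proof.
move=> Hy; rewrite /Pp; case Hx: (S x).
- have := trans_ge0 T x y; case/Rle_lt_or_eq_dec => // H.
  by move: (Sclosed Hx H); rewrite (negbTE Hy).
- case: eqP => // E; by move: Hy; rewrite E Sx0.
Qed.

Local Notation n := #|{: world V}|.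

Lemma left_kernel : exists vv : world V -> R, (exists x, vv x <> 0) /\
  forall y, \big[Rplus/0]_x (vv x * Pp x y) = vv y.
Proof.
pose A : 'M[R]_n := (\matrix_(i, j) (Pp (enum_val i) (enum_val j) - (i == j)%:R))%R.
have E : forall F : world V -> R, (\sum_(j < n) F (enum_val j))%R = \big[Rplus/0]_y F y.
{ move=> F; rewrite (reindex (@enum_rank (world V))) /=; last first.
    by apply: onW_bij; exact: enum_rank_bij.
  by apply: eq_bigr => y _; rewrite enum_rankK. }
have Ed : forall (i : 'I_n) (a : 'I_n -> R),
    (\sum_(j < n) a j * (j == i)%:R)%R = a i.
{ move=> i a; rewrite (bigD1 i) //= eqxx GRing.mulr1 big1 ?GRing.addr0 //.
  by move=> j /negbTE ->; rewrite GRing.mulr0. }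
have HA1 : (A *m (const_mx 1 : 'cV[R]_n) = 0)%R.
{ apply/matrixP => i k; rewrite !mxE.
  under eq_bigr do rewrite !mxE GRing.mulr1.
  rewrite GRing.sumrB (E (Pp (enum_val i))) Pp_sum1.
  have := Ed i (fun _ => 1%R).
  under eq_bigr do rewrite GRing.mul1r.
  rewrite (eq_bigr (fun j => (i == j)%:R)%R) => [->|j _]; first exact: GRing.subrr.
  by rewrite eq_sym. }
have Hne : ((const_mx 1 : 'cV[R]_n)^T != 0)%R.
{ apply/eqP => /matrixP /(_ ord0 (enum_rank x0)); rewrite !mxE => H.
  exact: R1_neq_R0 H. }
have : (\det A^T == 0)%R.
{ apply/det0P; exists (const_mx 1 : 'cV[R]_n)^T%R => //.
  by rewrite -trmx_mul HA1 trmx0. }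
rewrite det_tr => /det0P [v Hv0 HvA].
exists (fun x => v ord0 (enum_rank x)); split.
- case: (pickP (fun i => v ord0 i != 0%R)) => [i Hi|Hall].
  + by exists (enum_val i); rewrite enum_valK; apply/eqP.
  + exfalso; move/eqP: Hv0; apply; apply/matrixP => a b.
    by rewrite (ord1 a) mxE; move: (Hall b) => /negbFE/eqP.
- move=> y; move/matrixP: HvA => /(_ ord0 (enum_rank y)).
  rewrite !mxE /=.
  under eq_bigr do rewrite mxE enum_rankK GRing.mulrBr.
  rewrite GRing.sumrB Ed => /GRing.subr0_eq <-.
  rewrite -E; apply: eq_bigr => i _; by rewrite enum_valK.
Qed.

Lemma stat_exists : exists P, stationary T P /\ forall w, ~~ S w -> P w = 0.
Proof.
case: left_kernel => vv [[xn Hxn] Hv].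
pose p x := Rabs (vv x).
have Hp0 : forall x, 0 <= p x by move=> x; exact: Rabs_pos.
have Hle : forall y, p y <= \big[Rplus/0]_x (p x * Pp x y).
{ move=> y; rewrite /p -Hv; apply: Rle_trans (sumR_abs _ _ _) _.
  apply: sumR_le => x _; rewrite Rabs_mult (Rabs_right (Pp x y)).
  - lra.
  - have := Pp_ge0 x y; lra. }
have Hsum : \big[Rplus/0]_y (\big[Rplus/0]_x (p x * Pp x y) - p y) = 0.
{ rewrite sumR_minus exchange_big /=.
  have -> : \big[Rplus/0]_x \big[Rplus/0]_y (p x * Pp x y) = \big[Rplus/0]_x p x.
  { apply: eq_bigr => x _; rewrite -sumR_distrr Pp_sum1; lra. }
  by apply: Rminus_diag_eq; apply: eq_bigr. }
have Hfix : forall y, \big[Rplus/0]_x (p x * Pp x y) = p y.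
{ move=> y.
  have H0 : forall i, 0 <= (fun y => \big[Rplus/0]_x (p x * Pp x y) - p y) i.
  { move=> i /=; have H := Hle i; set X := bigop _ _ _ in H *; lra. }
  have H := @sumR_zero _ _ y H0 Hsum => /=; move: H => /=.
  set X := bigop _ _ _; lra. }
have Hs : 0 < \big[Rplus/0]_x p x.
{ have := sumR_term xn Hp0; have : 0 < p xn by apply: Rabs_pos_lt. lra. }
set s := \big[Rplus/0]_x p x in Hs *.
have Hout : forall y, ~~ S y -> p y = 0.
{ move=> y Hy; rewrite -Hfix; apply: big1 => x _; rewrite Pp_out //; lra. }
have Hs' : 0 < / s by apply: Rinv_0_lt_compat.
exists (fun x => p x / s); split; last first.
{ move=> w Hw; rewrite Hout //; rewrite /Rdiv; ring. }
split; [|split].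
- move=> W; apply: Rmult_le_pos => //; lra.
- rewrite /Rdiv.
  have -> : \big[Rplus/0]_W (p W * / s) = / s * s.
  { rewrite /s sumR_distrr; apply: eq_bigr => x _; ring. }
  field; lra.
- move=> U; rewrite /Rdiv -(Hfix U).
  rewrite [RHS]Rmult_comm sumR_distrr; apply: eq_bigr => W _.
  rewrite /Pp; case HW: (S W).
  + ring.
  + rewrite Hout ?HW //; ring.
Qed.
End Stat.
Lemma exists_max (T : finType) (x0 : T) (h : T -> R) : exists w0, forall w, h w <= h w0.
Proof.
have : forall s : seq T, exists w0, forall w, w \in s -> h w <= h w0.
{ elim=> [|x s [w1 Hw1]]; first by exists x0.
  case: (Rle_dec (h x) (h w1)) => Hx.
  - exists w1 => w; rewrite inE => /orP[/eqP->//|]; exact: Hw1.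
  - exists x => w; rewrite inE => /orP[/eqP->|/Hw1]; lra. }
case/(_ (enum T)) => w0 H; exists w0 => w; apply: H; by rewrite mem_enum.
Qed.

Lemma cv_const (a : R) : Un_cv (fun _ => a) a.
Proof. move=> e He; exists 0%N => n _; rewrite /R_dist Rminus_diag Rabs_R0; lra. Qed.

Lemma cv_sum (I : Type) (r : seq I) (P : pred I) (F : nat -> I -> R) (l : I -> R) :
  (forall i, Un_cv (fun n => F n i) (l i)) ->
  Un_cv (fun n => \big[Rplus/0]_(i <- r | P i) F n i) (\big[Rplus/0]_(i <- r | P i) l i).
Proof.
move=> H; elim: r => [|i r IH].
- rewrite big_nil; apply: (Un_cv_ext (fun _ => 0)); [by move=> n; rewrite big_nil | exact: cv_const].
- rewrite big_cons; case HP: (P i).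
  + apply: (Un_cv_ext (fun n => F n i + \big[Rplus/0]_(j <- r | P j) F n j)).
    * by move=> n; rewrite big_cons HP.
    * exact: CV_plus.
  + apply: (Un_cv_ext (fun n => \big[Rplus/0]_(j <- r | P j) F n j)) => // n.
    by rewrite big_cons HP.
Qed.
From Stdlib Require Import Classical ClassicalDescription.

Lemma cv_ge0 (u : nat -> R) l : (forall n, 0 <= u n) -> Un_cv u l -> 0 <= l.
Proof.
move=> H Hc; case: (Rle_lt_dec 0 l) => // Hl.
case: (Hc (- l)) => [|N HN]; first lra.
have := HN N (le_n N); rewrite /R_dist => Ha.
have := Rle_abs (u N - l); have := H N; lra.
Qed.

Lemma cv_shift (u : nat -> R) l : Un_cv u l -> Un_cv (fun n => u n.+1) l.
Proof.
move=> Hc e He; case: (Hc e He) => N HN; exists N => n Hn; apply: HN.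
apply: le_S; exact: Hn.
Qed.

Lemma cv_unshift (u : nat -> R) l : Un_cv (fun n => u n.+1) l -> Un_cv u l.
Proof.
move=> Hc e He; case: (Hc e He) => N HN; exists N.+1 => n Hn.
case: n Hn => [|n] Hn; first by inversion Hn.
apply: HN; apply/le_S_n; exact: Hn.
Qed.

Section Main.
Variables (L : OntologyLanguage) (V : finType) (K : DBL_KB L V) (c : ol_cons L) (phi : pform V).
Hypothesis Hphi : context_formula K.2 c phi.

Definition av (w : world V) : R := if psat w phi then 0 else 1.

Lemma av01 w : 0 <= av w <= 1.
Proof. rewrite /av; case: (psat w phi); lra. Qed.

Lemma prod_av (s : seq (world V)) :
  \big[Rmult/1]_(v <- s) av v = if has (fun v => psat v phi) s then 0 else 1.
Proof.
elim: s => [|x s IH]; first by rewrite big_nil.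
rewrite big_cons IH /av /=; case: (psat x phi); case: (has _ s) => /=; lra.
Qed.

Lemma ind_av t (ws : t.-tuple (world V)) :
  Defs.ind (exists i : 'I_t, entails (restrict K.2 (tnth ws i)) c) =
  1 - \big[Rmult/1]_(v <- ws) av v.
Proof.
rewrite prod_av /Defs.ind; case: excluded_middle_informative => H /=.
- case: hasP => [_|Hn]; first lra.
  exfalso; apply: Hn; case: H => i /Hphi Hi; exists (tnth ws i) => //; exact: mem_tnth.
- case: hasP => [[v Hv Hp]|_]; last lra.
  exfalso; apply: H; case/tnthP: Hv => i Ei; exists i; apply/Hphi; by rewrite -Ei.
Qed.

Local Notation g := (G K.1.2 av).

Lemma prob_within_S n :
  prob_within K c n.+1 =
  1 - \big[Rplus/0]_(w : world V) (av w * bn_joint K.1.1 w * g n w).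
Proof.
rewrite /prob_within.
rewrite (eq_bigr (fun ws : n.+1.-tuple (world V) =>
   \big[Rmult/1]_(v <- ws) 1 * unravel_joint K.1 ws -
   \big[Rmult/1]_(v <- ws) av v * unravel_joint K.1 ws)).
- rewrite sumR_minus !unravel_G; congr (_ - _).
  apply: (etrans _ (bn_sum1 K.1.1)); apply: eq_bigr => w _; rewrite G_one; lra.
- move=> ws _; rewrite ind_av big1_eq Rmult_minus_distr_r //.
Qed.

Lemma g_ge0 n w : 0 <= g n w.
Proof.
elim: n w => [|n IH] w /=; first lra.
apply: sumR_ge0 => w' _; apply: Rmult_le_pos => //.
apply: Rmult_le_pos; [exact: trans_ge0 | exact: (proj1 (av01 w'))].
Qed.

Lemma g_dec n w : g n.+1 w <= g n w.
Proof.
elim: n w => [|n IH] w.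
- rewrite /=; apply: (Rle_trans _ (\big[Rplus/0]_w' trans K.1.2 w w')).
  + apply: sumR_le => w' _; have := trans_ge0 K.1.2 w w'; have := av01 w'; nra.
  + rewrite trans_sum1; lra.
- rewrite [g n.+2 w]/= [g n.+1 w]/=; apply: sumR_le => w' _.
  apply: Rmult_le_compat_l; last exact: IH.
  apply: Rmult_le_pos; [exact: trans_ge0 | exact: (proj1 (av01 w'))].
Qed.


Lemma main_cv (Hdelta : exists d : R, is_delta K.1.2 phi d /\ 0 < d) :
  prob_eventually_is K c 1.
Proof.
case: Hdelta => d [[_ Hmin] Hd].
have Hcv : forall w, {l | Un_cv (fun n => g n w) l}.
{ move=> w; apply: decreasing_cv.
  - move=> n; exact: g_dec.
  - exists 0 => x [i ->]; rewrite /opp_seq; have := g_ge0 i w; lra. }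
pose h w := proj1_sig (Hcv w).
have Hh : forall w, Un_cv (fun n => g n w) (h w) := fun w => proj2_sig (Hcv w).
have Hh0 : forall w, 0 <= h w.
{ move=> w; apply: (cv_ge0 (fun n => g_ge0 n w) (Hh w)). }
have Hfix : forall w, h w = \big[Rplus/0]_w' (trans K.1.2 w w' * av w' * h w').
{ move=> w; eapply UL_sequence; first exact: (cv_shift (Hh w)).
  apply: (Un_cv_ext (fun n => \big[Rplus/0]_w' (trans K.1.2 w w' * av w' * g n w'))) => [n //|].
  have := @cv_sum _ (index_enum (world V)) xpredT
            (fun n w' => trans K.1.2 w w' * av w' * g n w')
            (fun w' => trans K.1.2 w w' * av w' * h w')
   (fun w' => CV_mult (fun _ => trans K.1.2 w w' * av w') _ _ _ (cv_const _) (Hh w')).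
  by []. }
case: (exists_max [ffun => false] h) => w0 Hw0.
have Hall0 : forall w, h w = 0.
{ case: (Rle_lt_dec (h w0) 0) => Hm.
  - move=> w; have := Hh0 w; have := Hw0 w; lra.
  - exfalso; set m := h w0 in Hm Hw0.
    have Hkey : forall w, h w = m -> forall w', 0 < trans K.1.2 w w' ->
                  av w' = 1 /\ h w' = m.
    { move=> w Hw w' Ht.
      pose F y := m * trans K.1.2 w y - trans K.1.2 w y * av y * h y.
      have HF0 : forall y, 0 <= F y.
      { move=> y; rewrite /F.
        have Hah : av y * h y <= m.
        { have := Hw0 y; have := Hh0 y; rewrite /av; case: (psat y phi); lra. }
        have := trans_ge0 K.1.2 w y; nra. }
      have HFs : \big[Rplus/0]_y F y = 0.
      { rewrite /F sumR_minus -sumR_distrr trans_sum1 -(Hfix w) Hw; lra. }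
      have := sumR_zero w' HF0 HFs; rewrite /F => HF.
      have Hmul : trans K.1.2 w w' * (m - av w' * h w') = 0 by rewrite -HF; ring.
      case: (Rmult_integral _ _ Hmul) => [|Hz]; first lra.
      move: Hz; rewrite /av; case: (psat w' phi) => Hz; [exfalso; lra | split; lra]. }
    have [y Hy] : exists y, 0 < trans K.1.2 w0 y.
    { apply: NNPP => Hn.
      have : \big[Rplus/0]_y trans K.1.2 w0 y = 0.
      { apply: big1 => y _; have := trans_ge0 K.1.2 w0 y; case/Rle_lt_or_eq_dec => // Hlt.
        exfalso; apply: Hn; by exists y. }
      rewrite trans_sum1; lra. }
    pose S' := fun w => (h w == m) && ~~ psat w phi.
    have HS'y : S' y.
    { case: (Hkey w0 erefl y Hy) => Ha Hhy; rewrite /S' Hhy eqxx /=.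
      move: Ha; rewrite /av; case: (psat y phi) => //= Ha; lra. }
    have Hcl : forall x y', S' x -> 0 < trans K.1.2 x y' -> S' y'.
    { move=> x y' /andP[/eqP Hx _] Ht; case: (Hkey x Hx y' Ht) => Ha Hhy.
      rewrite /S' Hhy eqxx /=; move: Ha; rewrite /av; case: (psat y' phi) => //= Ha; lra. }
    case: (stat_exists HS'y Hcl) => P [Pst Pout].
    have := Hmin P Pst.
    have -> : mass P phi = 0.
    { rewrite /mass; apply: big1 => W HW; apply: Pout; by rewrite /S' HW andbF. }
    lra. }
rewrite /prob_eventually_is; apply: cv_unshift.
apply: (Un_cv_ext (fun n => 1 - \big[Rplus/0]_(w : world V) (av w * bn_joint K.1.1 w * g n w))).
{ move=> n; by rewrite prob_within_S. }
have Hl := @cv_sum _ (index_enum (world V)) xpredT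
            (fun n w => av w * bn_joint K.1.1 w * g n w)
            (fun w => av w * bn_joint K.1.1 w * h w)
            (fun w => CV_mult (fun _ => av w * bn_joint K.1.1 w) _ _ _ (cv_const _) (Hh w)).
have E0 : \big[Rplus/0]_(w <- index_enum (world V) | xpredT w) (av w * bn_joint K.1.1 w * h w) = 0.
{ apply: big1 => w _; rewrite Hall0; ring. }
rewrite E0 in Hl.
have := CV_minus _ _ _ _ (cv_const 1) Hl.
rewrite Rminus_0_r; exact.
Qed.
End Main.

Theorem mainTheorem3 (L : OntologyLanguage) (V : finType) (K : DBL_KB L V)
  (HO : is_vontology K.2) (c : ol_cons L) (phi : pform V)
  (Hphi : context_formula K.2 c phi)
  (Hdelta : exists d : R, is_delta K.1.2 phi d /\ 0 < d) :
  prob_eventually_is K c 1.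
Proof. exact: (main_cv Hphi Hdelta). Qed.
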